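(* Let $H,r,b,\lambda$ be positive integers with $0<r,b<H$, $\lambda<\min\{r,b\}$ and $r+b\le H$, and let $F=\binom{H}{b}-\sum_{i=0}^{\lambda-1}\binom{r}{i}\binom{H-r}{b-i}$. Then for any number $N$ of files there exists an $F$-division $(\binom{H}{r},M,N)$ coded caching scheme with memory ratio $$\frac{M}{N}=1-\frac{\binom{r}{\lambda}\binom{H-r}{b-\lambda}}{F}$$ and transmission rate $$R=\frac{\binom{H}{r+b-2\lambda}}{F}\binom{H-(r+b-2\lambda)}{\lambda}.$$
   Context: Coded caching model: a server holds $N$ files $W_0,\dots,W_{N-1}$ of equal size, connected by a shared error-free broadcast link to $K$ users, each with a cache of size $M$ files. An $F$-division $(K,M,N)$ coded caching scheme consists of: (placement) each file is split into $F$ equal-size packets and each user $k$ stores content $\mathcal{Z}_k$ (packets or coded combinations of packets, possibly over a finite field) of total size at most $M$ files, without knowledge of the demands; (delivery) for each demand vector $\mathbf{d}=(d_0,\dots,d_{K-1})\in\{0,\dots,N-1\}^K$ (user $k$ requests $W_{d_k}$), the server broadcasts a signal of size $R_{\mathbf{d}}$ files such that every user $k$ can recover $W_{d_k}$ from the signal and $\mathcal{Z}_k$. The memory ratio is $M/N$ and the transmission rate is $R=\max_{\mathbf{d}}R_{\mathbf{d}}$. *)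

(* Defs.v *)
From HB Require Import structures.
From mathcomp Require Import all_boot all_order all_algebra.
Set Implicit Arguments. Unset Strict Implicit. Unset Printing Implicit Defensive.
Import Order.TTheory GRing.Theory Num.Theory.
Local Open Scope ring_scope.

(* Linear coded caching model over a field 𝕂 (symbols of 𝕂 are the unit of
   size).  A library is W : 'I_N -> 'I_F -> 𝕂 : file n is split into F
   equal-size packets W n 0, ..., W n (F-1).
   - placement: user k stores [cache_len k] linear combinations of packets;
     combination i has coefficient [cache_coef k i n j] on packet (n,j).
     The placement does not depend on the demand.
   - delivery: for each demand vector d : {ffun 'I_K -> 'I_N}, the server
     broadcasts [sig_len d] linear combinations of packets. *)
Record caching_scheme (𝕂 : fieldType) (K N F : nat) := CachingScheme {
  cache_len : 'I_K -> nat;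
  cache_coef : forall k : 'I_K, 'I_(cache_len k) -> 'I_N -> 'I_F -> 𝕂;
  sig_len : {ffun 'I_K -> 'I_N} -> nat;
  sig_coef : forall d : {ffun 'I_K -> 'I_N}, 'I_(sig_len d) -> 'I_N -> 'I_F -> 𝕂
}.
Arguments cache_coef {_ _ _ _} c k i n j.
Arguments sig_coef {_ _ _ _} c d i n j.

Section Defs.
Local Unset Implicit Arguments.
Variables (𝕂 : fieldType) (K N F : nat) (S : caching_scheme 𝕂 K N F).

Definition cache_content (W : 'I_N -> 'I_F -> 𝕂) (k : 'I_K) :
  'I_(cache_len S k) -> 𝕂 :=
  fun i => \sum_(n < N) \sum_(j < F) cache_coef S k i n j * W n j.

Definition signal (W : 'I_N -> 'I_F -> 𝕂) (d : {ffun 'I_K -> 'I_N}) :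
  'I_(sig_len S d) -> 𝕂 :=
  fun i => \sum_(n < N) \sum_(j < F) sig_coef S d i n j * W n j.

Definition decodable : Prop :=
  forall (d : {ffun 'I_K -> 'I_N}) (k : 'I_K),
    exists dec : ('I_(sig_len S d) -> 𝕂) -> ('I_(cache_len S k) -> 𝕂) -> 'I_F -> 𝕂,
      forall (W : 'I_N -> 'I_F -> 𝕂) (j : 'I_F),
        dec (signal W d) (cache_content W k) j = W (d k) j.

Definition cache_within (M : rat) : Prop :=
  forall k : 'I_K, ((cache_len S k)%:R / F%:R : rat) <= M.

Definition rate : rat :=
  \big[Num.max/0]_(d : {ffun 'I_K -> 'I_N}) ((sig_len S d)%:R / F%:R).
End Defs.
Arguments cache_content {_ _ _ _} S W k i.
Arguments signal {_ _ _ _} S W d i.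
Arguments decodable {_ _ _ _} S.
Arguments cache_within {_ _ _ _} S M.
Arguments rate {_ _ _ _} S.

Definition is_coded_caching_scheme (𝕂 : fieldType) (K N F : nat)
  (S : caching_scheme 𝕂 K N F) (M R : rat) : Prop :=
  decodable S /\ cache_within S M /\ rate S = R.

(* Main.v *)
Require Import Defs.
From HB Require Import structures.
From mathcomp Require Import all_boot all_order all_algebra.
From mathcomp Require Import zify ring.
Set Implicit Arguments. Unset Strict Implicit. Unset Printing Implicit Defensive.
Import Order.TTheory GRing.Theory Num.Theory.

Ltac fin := intros; simpl in *; repeat (match goal with h : true = true -> _ |- _ => specialize (h erefl) | h : is_true true -> _ |- _ => specialize (h erefl) end); simpl in *; try discriminate; done.

Section Count.
Variables (H r b : nat) (U : {set 'I_H}).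
Hypothesis hU : #|U| = r.

Lemma count_eq (i : nat) : (i <= b)%N ->
  #|[set B : {set 'I_H} | (#|B| == b) && (#|U :&: B| == i)]| = ('C(r, i) * 'C(H - r, b - i))%N.
Proof.
move=> hib.
set D := setX [set I : {set 'I_H} | I \subset U & #|I| == i] [set J : {set 'I_H} | J \subset ~: U & #|J| == (b - i)%N].
have hCU : #|~: U| = (H - r)%N.
  have h := cardsC U; rewrite card_ord hU in h; lia.
have -> : [set B : {set 'I_H} | (#|B| == b) && (#|U :&: B| == i)] =
          [set IJ.1 :|: IJ.2 | IJ in D].
  apply/setP => B; rewrite inE; apply/andP/imsetP.
  - case=> /eqP hB /eqP hI; exists (U :&: B, B :\: U).
      rewrite !inE /= subsetIl hI eqxx /=.
      have hsub : B :\: U \subset ~: U by apply/subsetP => x; rewrite !inE => /andP[].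
      rewrite hsub /=.
      have h := cardsID U B; rewrite setIC in h; rewrite hI hB in h; by rewrite -h addKn.
    by apply/setP => x; rewrite !inE; case: (x \in U); case: (x \in B).
  - case=> [[I J]] /= /[!inE] /= /andP[/andP[sI /eqP cI] /andP[sJ /eqP cJ]] ->.
    have hUI : U :&: (I :|: J) = I.
      apply/setP => x; rewrite !inE.
      have := subsetP sI x; have := subsetP sJ x; rewrite !inE.
      by case: (x \in U); case: (x \in I); case: (x \in J); fin.
    rewrite hUI cI eqxx; split => //.
    have hdis : I :&: J = set0.
      apply/setP => x; rewrite !inE.
      have := subsetP sI x; have := subsetP sJ x; rewrite !inE.
      by case: (x \in U); case: (x \in I); case: (x \in J); fin.
    rewrite cardsU hdis cards0 cI cJ; apply/eqP; lia.
rewrite card_in_imset.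
  by rewrite cardsX !cards_draws hU hCU.
move=> [I J] [I' J'] /[!inE] /= /andP[/andP[sI _] /andP[sJ _]] /andP[/andP[sI' _] /andP[sJ' _]] E.
have h1 : forall I J : {set 'I_H}, I \subset U -> J \subset ~: U -> (I :|: J) :&: U = I.
  move=> X Y sX sY; apply/setP => x; rewrite !inE.
  have := subsetP sX x; have := subsetP sY x; rewrite !inE.
  by case: (x \in U); case: (x \in X); case: (x \in Y); fin.
have h2 : forall I J : {set 'I_H}, I \subset U -> J \subset ~: U -> (I :|: J) :\: U = J.
  move=> X Y sX sY; apply/setP => x; rewrite !inE.
  have := subsetP sX x; have := subsetP sY x; rewrite !inE.
  by case: (x \in U); case: (x \in X); case: (x \in Y); fin.
have e1 := h1 I J sI sJ; have e2 := h2 I J sI sJ; rewrite E h1 // in e1; rewrite E h2 // in e2; by rewrite e1 e2.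
Qed.

Lemma count_lt (m : nat) : (m <= b.+1)%N ->
  #|[set B : {set 'I_H} | (#|B| == b) && (#|U :&: B| < m)]| =
  (\sum_(i < m) 'C(r, i) * 'C(H - r, b - i))%N.
Proof.
elim: m => [|m IH] hm.
  rewrite big_ord0; apply/eqP; rewrite cards_eq0; apply/eqP/setP => B.
  by rewrite !inE ltn0 andbF.
rewrite big_ord_recr /= -IH ?(ltnW hm) // -count_eq; last by rewrite -ltnS.
rewrite -[LHS](cardsID [set B : {set 'I_H} | #|U :&: B| == m]) addnC; congr (_ + _).
  apply: eq_card => B; rewrite !inE ltnS leq_eqVlt.
  by case E: (#|U :&: B| == m); rewrite /= ?(eqP E) ?ltnn ?andbF ?andbT.
apply: eq_card => B; rewrite !inE ltnS leq_eqVlt.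
by case: (#|U :&: B| == m); rewrite /= ?andbF ?andbT ?andbF.
Qed.
End Count.

Lemma cardP (H s lam : nat) :
  #|[set ST : {set 'I_H} * {set 'I_H} | [&& #|ST.1| == s, #|ST.2| == lam & [disjoint ST.1 & ST.2]]]|
  = ('C(H, s) * 'C(H - s, lam))%N.
Proof.
rewrite -sum1_card.
rewrite (eq_bigl (fun p : {set 'I_H} * {set 'I_H} => [&& #|p.1| == s, #|p.2| == lam & [disjoint p.1 & p.2]])); last by move=> p; rewrite inE.
rewrite -(pair_big_dep (fun S : {set 'I_H} => #|S| == s) (fun (S Tt : {set 'I_H}) => (#|Tt| == lam) && [disjoint S & Tt]) (fun _ _ => 1%N)) /=.
rewrite (eq_bigr (fun _ => 'C(H - s, lam))) => [|S /eqP hS].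
  rewrite sum_nat_const; congr (_ * _)%N.
  rewrite -[X in 'C(X, _)](card_ord H) -card_draws.
  by apply: eq_card => S; rewrite !inE.
rewrite sum1_card.
have hC : #|~: S| = (H - s)%N.
  have h := cardsC S; rewrite card_ord hS in h; lia.
rewrite -hC -cards_draws; apply: eq_card => Tt; rewrite !inE.
by rewrite subsets_disjoint setCK disjoint_sym andbC.
Qed.

Local Open Scope ring_scope.

Section Scheme.
Local Unset Implicit Arguments.
Variables (H r b lam N F p : nat).

Definition Lsig := ('C(H, r + b - 2 * lam) * 'C(H - (r + b - 2 * lam), lam))%N.
Definition alpha (B : {set 'I_H}) : 'F_p := (enum_rank B : nat)%:R.
Definition Us := [set U : {set 'I_H} | #|U| == r].
Definition uset (k : 'I_('C(H, r))) : {set 'I_H} := nth set0 (enum Us) k.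
Definition Cset (U : {set 'I_H}) :=
  [set B : {set 'I_H} | (#|B| == b) && (lam < #|U :&: B|)%N].
Definition CS (k : 'I_('C(H, r))) := setX [set: 'I_N] (Cset (uset k)).
Definition Pset := [set ST : {set 'I_H} * {set 'I_H} |
  [&& #|ST.1| == (r + b - 2 * lam)%N, #|ST.2| == lam & [disjoint ST.1 & ST.2]]].
Definition sel (S Tt : {set 'I_H}) (k : 'I_('C(H, r))) :=
  (Tt \subset uset k) && (uset k \subset S :|: Tt).
Definition Bp (S Tt : {set 'I_H}) (k : 'I_('C(H, r))) := (S :\: uset k) :|: Tt.

Definition scheme : caching_scheme 'F_p 'C(H, r) N F :=
  @CachingScheme _ 'C(H, r) N F
  (fun k => #|CS k|)
  (fun k i n j => let q := nth (n, set0) (enum (CS k)) i in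
     if q.1 == n then alpha q.2 ^+ j else 0)
  (fun _ => Lsig)
  (fun d i n j => let ST := nth (set0, set0) (enum Pset) i in
     \sum_(k | sel ST.1 ST.2 k) (if d k == n then alpha (Bp ST.1 ST.2 k) ^+ j else 0)).

Definition code (W : 'I_N -> 'I_F -> 'F_p) (n : 'I_N) (B : {set 'I_H}) :=
  \sum_(j < F) W n j * alpha B ^+ j.

Lemma cacheE W k (i : 'I_(cache_len scheme k)) (n0 : 'I_N) :
  cache_content scheme W k i =
  code W (nth (n0, set0) (enum (CS k)) i).1 (nth (n0, set0) (enum (CS k)) i).2.
Proof.
rewrite /cache_content /=.
have hi : (i < size (enum (CS k)))%N by rewrite -cardE; exact: ltn_ord.
under eq_bigr => n _ do rewrite (set_nth_default (n0, set0) (n, set0) hi).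
set q := nth _ _ _.
rewrite (bigD1 q.1) //= [X in _ + X]big1 ?addr0; last first.
  move=> n /= hn; apply: big1 => j _; by rewrite eq_sym (negbTE hn) mul0r.
rewrite eqxx /code; apply: eq_bigr => j _; exact: mulrC.
Qed.

Lemma signalE W d (i : 'I_(sig_len scheme d)) :
  signal scheme W d i =
  \sum_(k | sel (nth (set0, set0) (enum Pset) i).1 (nth (set0, set0) (enum Pset) i).2 k)
     code W (d k) (Bp (nth (set0, set0) (enum Pset) i).1 (nth (set0, set0) (enum Pset) i).2 k).
Proof.
rewrite /signal /=.
set ST := nth _ _ _.
under eq_bigr => n _ do under eq_bigr => j _ do rewrite mulr_suml.
under eq_bigr => n _ do rewrite exchange_big /=.
rewrite exchange_big /=; apply: eq_bigr => k _.
rewrite (bigD1 (d k)) //= [X in _ + X]big1 ?addr0; last first.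
  move=> n /= hn; apply: big1 => j _; by rewrite eq_sym (negbTE hn) mul0r.
rewrite eqxx /code; apply: eq_bigr => j _; exact: mulrC.
Qed.

End Scheme.

Section Key.
Variables (H r b lam N F p : nat).
Hypotheses (hlr : (lam < r)%N) (hlb : (lam < b)%N) (hrbH : (r + b <= H)%N)
  (hF : (F + \sum_(i < lam) 'C(r, i) * 'C(H - r, b - i))%N = 'C(H, b))
  (pp : prime p) (hp : (#|{set 'I_H}| < p)%N).
Local Notation Us := (Us H r).
Local Notation uset := (uset H r).
Local Notation alpha := (alpha H p).
Local Notation Cset := (Cset H b lam).
Local Notation CS := (CS H r b lam N).
Local Notation Pset := (Pset H r b lam).
Local Notation sel := (sel H r).
Local Notation Bp := (Bp H r).
Local Notation scheme := (scheme H r b lam N F p).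
Local Notation code := (code H N F p).

Lemma cardUs : #|Us| = 'C(H, r).
Proof. by rewrite /Us card_draws card_ord. Qed.

Lemma uset_in k : uset k \in Us.
Proof. by rewrite /uset /= -mem_enum mem_nth // -cardE cardUs. Qed.

Lemma card_uset k : #|uset k| = r.
Proof. by have := uset_in k; rewrite inE => /eqP. Qed.

Lemma uset_inj : injective uset.
Proof.
move=> k k' E; apply: ord_inj; move: E; rewrite /uset.
move/eqP; rewrite nth_uniq ?enum_uniq // -?cardE ?cardUs //; first by move/eqP.
Qed.

Lemma alpha_inj : injective alpha.
Proof.
move=> B B'; rewrite /alpha => /(congr1 (@nat_of_ord _)); rewrite !val_Fp_nat // !modn_small.
- by move/ord_inj/enum_rank_inj.
- have h := ltn_ord (enum_rank B'); apply: leq_trans h _; exact: ltnW.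
- have h := ltn_ord (enum_rank B); apply: leq_trans h _; exact: ltnW.
Qed.

Definition Good (U : {set 'I_H}) :=
  [set B : {set 'I_H} | (#|B| == b) && (lam <= #|U :&: B|)%N].

Lemma card_Good_Cset (U : {set 'I_H}) : #|U| = r ->
  #|Good U| = F /\ (#|Cset U| + 'C(r, lam) * 'C(H - r, b - lam))%N = F.
Proof.
move=> hU.
have Hall : #|[set B : {set 'I_H} | #|B| == b]| = 'C(H, b) by rewrite card_draws card_ord.
have Hlt := count_lt (b := b) hU (m := lam) (leqW (ltnW hlb)).
have Heq := count_eq (b := b) hU (i := lam) (ltnW hlb).
have e1 : #|[set B : {set 'I_H} | #|B| == b]| =
   (#|[set B : {set 'I_H} | (#|B| == b) && (#|U :&: B| < lam)%N]| + #|Good U|)%N.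
  rewrite -(cardsID [set B : {set 'I_H} | (#|U :&: B| < lam)%N]); congr (_ + _)%N.
    by apply: eq_card => B; rewrite !inE andbC.
  by apply: eq_card => B; rewrite !inE -leqNgt andbC.
have e2 : #|Good U| =
   (#|[set B : {set 'I_H} | (#|B| == b) && (#|U :&: B| == lam)]| + #|Cset U|)%N.
  rewrite -(cardsID [set B : {set 'I_H} | #|U :&: B| == lam]); congr (_ + _)%N.
    apply: eq_card => B; rewrite !inE; case: (#|B| == b) => //=.
    by case E: (_ == _); rewrite ?(eqP E) ?leqnn ?andbF.
  apply: eq_card => B; rewrite !inE; case: (#|B| == b); rewrite /= ?andbF //.
  by rewrite ltn_neqAle eq_sym.
rewrite Heq in e2; rewrite Hlt Hall in e1.
split; lia.
Qed.

Lemma key W W' (d : {ffun 'I_('C(H, r)) -> 'I_N}) k :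
  (forall i, signal scheme W d i = signal scheme W' d i) ->
  (forall i, cache_content scheme W k i = cache_content scheme W' k i) ->
  forall j, W (d k) j = W' (d k) j.
Proof.
move=> hsig hcache.
set U := uset k.
pose D := fun n j => W n j - W' n j.
have codeD n B : code D n B = code W n B - code W' n B.
  by rewrite /code -sumrB; apply: eq_bigr => j _; rewrite mulrBl.
have hA : forall n B, B \in Cset U -> code D n B = 0.
  move=> n B hB.
  have hin : (n, B) \in CS k by rewrite /CS inE /= in_setT hB.
  have hi : (index (n, B) (enum (CS k)) < #|CS k|)%N by rewrite cardE index_mem mem_enum.
  have := hcache (Ordinal hi); rewrite !(cacheE _ _ _ _ _ _ _ _ _ _ n) /= nth_index ?mem_enum // => e.
  by rewrite codeD e subrr.
have hB : forall ST, ST \in Pset ->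
    \sum_(k' | sel ST.1 ST.2 k') code D (d k') (Bp ST.1 ST.2 k') = 0.
  move=> ST hST.
  have hi : (index ST (enum Pset) < Lsig H r b lam)%N.
    by rewrite /Lsig -(cardP H) cardE index_mem mem_enum.
  have := hsig (Ordinal hi); rewrite !signalE /= nth_index ?mem_enum // => e.
  by rewrite (eq_bigr _ (fun k' _ => codeD _ _)) sumrB e subrr.
have hC : forall B : {set 'I_H}, #|B| = b -> #|U :&: B| = lam -> code D (d k) B = 0.
  move=> B cB cI.
  pose S := (U :\: B) :|: (B :\: U). pose Tt := U :&: B.
  have cU : #|U| = r := card_uset k.
  have cUB : #|U :\: B| = (r - lam)%N.
    have h := cardsID B U; rewrite cI cU in h; lia.
  have cBU : #|B :\: U| = (b - lam)%N.
    have h := cardsID U B; rewrite setIC cI cB in h; lia.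
  have cS : #|S| = (r + b - 2 * lam)%N.
    rewrite /S cardsU cUB cBU.
    have -> : (U :\: B) :&: (B :\: U) = set0.
      by apply/setP => x; rewrite !inE; case: (x \in U); case: (x \in B).
    rewrite cards0; lia.
  have dST : [disjoint S & Tt].
    rewrite -setI_eq0; apply/eqP/setP => x; rewrite /S /Tt !inE.
    by case: (x \in U); case: (x \in B).
  have hP : (S, Tt) \in Pset by rewrite inE /= cS cI dST !eqxx.
  have selk : sel S Tt k.
    rewrite /sel subsetIl /=; apply/subsetP => x; rewrite /S /Tt !inE.
    by case: (x \in U); case: (x \in B).
  have BpK : Bp S Tt k = B.
    by apply/setP => x; rewrite /Bp /S /Tt !inE; case: (x \in U); case: (x \in B).
  have := hB _ hP; rewrite /= (bigD1 k) //= BpK [X in _ + X]big1 ?addr0 //.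
  move=> k' /andP [hsel hne].
  apply: hA.
  have cU' : #|uset k'| = r := card_uset k'.
  have hUU' : U != uset k'.
    apply: contra hne => /eqP E; apply/eqP; symmetry; exact: uset_inj E.
  move: hsel; rewrite /sel => /andP [sT sU'].
  have eUS : uset k' :\: S = Tt.
    apply/setP => x; have := subsetP sT x; have := subsetP sU' x.
    rewrite /S /Tt !inE.
    by case: (x \in U); case: (x \in B); case: (x \in uset k'); fin.
  have c1 : #|uset k' :&: S| = (r - lam)%N.
    have h := cardsID S (uset k'); rewrite eUS cU' /Tt cI in h; lia.
  have c2 : #|S :\: uset k'| = (r + b - 2 * lam - (r - lam))%N.
    have h := cardsID (uset k') S; rewrite setIC c1 cS in h; lia.
  rewrite inE; apply/andP; split.
    rewrite /Bp cardsU c2 /Tt cI.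
    have -> : (S :\: uset k') :&: (U :&: B) = set0.
      by apply/setP => x; rewrite /S !inE; case: (x \in U); case: (x \in B); case: (x \in uset k').
    rewrite cards0; apply/eqP; lia.
  have : (U :&: S) :\: uset k' != set0.
    apply/negP => /eqP E0.
    have sub : U \subset uset k'.
      apply/subsetP => x xU; have := congr1 (fun A : {set 'I_H} => x \in A) E0; have := subsetP sT x.
      rewrite /S /Tt !inE xU /=.
      by case: (x \in B); case: (x \in uset k'); fin.
    have : U == uset k' by rewrite eqEcard sub cU cU' leqnn.
    by rewrite (negbTE hUU').
  case/set0Pn => x hx.
  have sub : x |: Tt \subset U :&: Bp S Tt k'.
    apply/subsetP => y /setU1P [-> | hy].
      move: hx; rewrite /Bp /S /Tt !inE.
      by case: (x \in U); case: (x \in B); case: (x \in uset k'); fin.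
    have := subsetP sT y hy; move: hy; rewrite /Bp /S /Tt !inE.
    by case: (y \in U); case: (y \in B); case: (y \in uset k'); fin.
  apply: leq_trans (subset_leq_card sub).
  rewrite cardsU1 /Tt cI.
  have -> : x \notin U :&: B.
    move: hx; rewrite /S !inE; case: (x \in U); case: (x \in B); case: (x \in uset k'); fin.
  by [].
have hG : forall B, B \in Good U -> code D (d k) B = 0.
  move=> B; rewrite inE => /andP [/eqP cB]; rewrite leq_eqVlt => /orP [/eqP e | lt].
    exact: hC.
  by apply: hA; rewrite inE cB eqxx lt.
have [cG _] := card_Good_Cset (card_uset k).
pose E := fun j : nat => if insub j is Some o then D (d k) o else 0.
pose P := \poly_(j < F) E j.
have P0 : P = 0.
  apply/eqP; apply/negPn/negP => nz.
  have := max_poly_roots nz (rs := map alpha (enum (Good U))).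
  rewrite size_map -cardE cG.
  have -> : all (root P) (map alpha (enum (Good U))).
    apply/allP => x /mapP [B hB0 ->]; rewrite /root /P horner_poly.
    rewrite mem_enum in hB0.
    apply/eqP; rewrite -[RHS](hG B hB0) /code; apply: eq_bigr => j _.
    by rewrite /E valK.
  rewrite map_inj_uniq ?enum_uniq; last exact: alpha_inj.
  move=> /(_ isT isT) h; have := size_poly F E; rewrite -/P => h2.
  by have := leq_trans h h2; rewrite ltnn.
move=> j; apply/eqP; rewrite -subr_eq0; apply/eqP.
have := congr1 (fun q : {poly 'F_p} => q`_j) P0; rewrite /P coef_poly ltn_ord coef0 /E valK.
by [].
Qed.
End Key.

Lemma signal_ext (K0 : fieldType) (K N F : nat) (S : caching_scheme K0 K N F) W W' d i :
  (forall n j, W n j = W' n j) -> signal S W d i = signal S W' d i.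
Proof. by move=> e; rewrite /signal; apply: eq_bigr => n _; apply: eq_bigr => j _; rewrite e. Qed.

Lemma cache_ext (K0 : fieldType) (K N F : nat) (S : caching_scheme K0 K N F) W W' k i :
  (forall n j, W n j = W' n j) -> cache_content S W k i = cache_content S W' k i.
Proof. by move=> e; rewrite /cache_content; apply: eq_bigr => n _; apply: eq_bigr => j _; rewrite e. Qed.

Lemma iter_max (c : rat) n : 0 <= c -> (0 < n)%N -> iter n (Num.max c) 0 = c.
Proof.
move=> c0; case: n => // n _; elim: n => [|n IH]; first by rewrite /= max_l.
by rewrite iterS IH maxxx.
Qed.

Unset Implicit Arguments.

Theorem theorem3 (H r b lambda F N : nat) :
  (0 < H)%N -> (0 < r)%N -> (0 < b)%N -> (0 < lambda)%N ->
  (r < H)%N -> (b < H)%N -> (lambda < minn r b)%N -> (r + b <= H)%N ->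
  (F + \sum_(i < lambda) 'C(r, i) * 'C(H - r, b - i))%N = 'C(H, b) ->
  (0 < N)%N ->
  exists (𝕂 : finFieldType) (S : caching_scheme 𝕂 'C(H, r) N F),
    is_coded_caching_scheme S
      (N%:R * (1 - ('C(r, lambda) * 'C(H - r, b - lambda))%:R / F%:R))
      ('C(H, r + b - 2 * lambda)%:R / F%:R
         * ('C(H - (r + b - 2 * lambda), lambda))%:R).
Proof.
move=> _ _ _ _ _ _ hmin hrbH hF hN.
have hlr : (lambda < r)%N by move: hmin; rewrite leq_min => /andP[].
have hlb : (lambda < b)%N by move: hmin; rewrite leq_min => /andP[].
case: (prime_above #|{set 'I_H}|) => p hp pp.
exists 'F_p; exists (scheme H r b lambda N F p).
split; [|split].
- move=> d k.
  exists (fun x z j =>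
    match [pick W0 : {ffun 'I_N -> {ffun 'I_F -> 'F_p}} |
       [forall i, signal (scheme H r b lambda N F p) (fun n j => W0 n j) d i == x i] &&
       [forall i, cache_content (scheme H r b lambda N F p) (fun n j => W0 n j) k i == z i]] with
    | Some W0 => W0 (d k) j | None => 0 end).
  move=> W j; case: pickP => [W0 /andP [/forallP h1 /forallP h2] | none].
    apply: (key hlr hlb hrbH hF pp hp (W := fun n j => W0 n j) (W' := W)) => i; [exact: (eqP (h1 i)) | exact: (eqP (h2 i))].
  pose Wf := [ffun n => [ffun j => W n j]].
  have e : forall n j0, Wf n j0 = W n j0 by move=> n j0; rewrite !ffunE.
  have := none Wf.
  have t1 : [forall i, signal (scheme H r b lambda N F p) (fun n j => Wf n j) d i ==
                       signal (scheme H r b lambda N F p) W d i].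
    by apply/forallP => i; rewrite (signal_ext _ e).
  have t2 : [forall i, cache_content (scheme H r b lambda N F p) (fun n j => Wf n j) k i ==
                       cache_content (scheme H r b lambda N F p) W k i].
    by apply/forallP => i; rewrite (cache_ext _ e).
  by rewrite /= t1 t2.
- move=> k.
  have [_ hc] := card_Good_Cset hlr hlb hrbH hF pp hp (card_uset k).
  rewrite /= /CS cardsX cardsT card_ord.
  move: hc; set c := #|_|; set A := ('C(r, lambda) * _)%N => hc.
  have A0 : (0 < A)%N.
    by rewrite muln_gt0 !bin_gt0 (ltnW hlr) /=; lia.
  rewrite -hc natrM natrD le_eqVlt; apply/orP; left; apply/eqP.
  field.
  by rewrite -natrD pnatr_eq0 -lt0n addn_gt0 A0 orbT.
- rewrite /rate /= big_const iter_max.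
  + by rewrite /Lsig natrM mulrAC.
  + by apply: divr_ge0; apply: ler0n.
  + by rewrite card_ffun card_ord expn_gt0 hN.
Qed.
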